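(* Let $G$ be a finite simple graph with at least $3$ vertices, and let $v_1,v_2\in V(G)$ be two leaves of $G$. Then $M_2(G)=M_2(G_{(v_1,v_2)})$.
   Context: A leaf is a vertex with exactly one neighbor. If $v_1,v_2$ are leaves with incident edges $\{w_1,v_1\}$ and $\{w_2,v_2\}$, then $G_{(v_1,v_2)}$ is the graph obtained by identifying $v_1$ and $v_2$ into a single vertex $v_1v_2$: its vertex set is $V(G)\setminus\{v_1,v_2\}\cup\{v_1v_2\}$ and its edge set is $E(G)\setminus\{\{w_1,v_1\},\{w_2,v_2\}\}\cup\{\{w_1,v_1v_2\},\{w_2,v_1v_2\}\}$; edges of $G$ and $G_{(v_1,v_2)}$ are identified in the obvious way. A $2$-matching is a set of edges in which every vertex has degree at most $2$; $M_2(G)$ is the simplicial complex whose vertices are edges of $G$ and whose faces are $2$-matchings of $G$. *)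

(* Defs.v *)
From mathcomp Require Import all_boot.
Set Implicit Arguments. Unset Strict Implicit. Unset Printing Implicit Defensive.

(* A finite (multi)graph with vertex labels in V and edge labels in E:
   a vertex set, an edge set, and for every edge its set of endpoints
   (a singleton set encodes a loop). *)
Record mgraph (V E : finType) := MGraph {
  mverts : {set V};
  medges : {set E};
  mends  : E -> {set V}
}.

Definition mdeg (V E : finType) (G : mgraph V E) (F : {set E}) (x : V) : nat :=
  \sum_(e in F | x \in mends G e) (if #|mends G e| == 1 then 2 else 1).

Definition two_matching (V E : finType) (G : mgraph V E) (F : {set E}) : bool :=
  (F \subset medges G) && [forall x in mverts G, mdeg G F x <= 2].

(* M_2(G): the simplicial complex (given by its set of faces) on the edges of
   G whose faces are the 2-matchings *)
Definition M2 (V E : finType) (G : mgraph V E) : {set {set E}} :=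
  [set F | two_matching G F].

Definition sedges (T : finType) (adj : rel T) : {set {set T}} :=
  [set e : {set T} | [exists x, exists y, adj x y && (e == [set x; y])]].

Definition sgraph (T : finType) (adj : rel T) : mgraph T {set T} :=
  MGraph setT (sedges adj) id.

Definition is_leaf (T : finType) (adj : rel T) (v : T) : bool :=
  #|[set u | adj v u]| == 1.

(* G_(v1,v2): identify v1 and v2 into one vertex, represented by v1
   (v2 is removed); edges keep their labels (the "obvious" identification),
   the endpoints of an edge are mapped through the identification. *)
Definition merge (T : finType) (v1 v2 : T) (x : T) : T :=
  if x == v2 then v1 else x.

Definition identify_leaves (T : finType) (adj : rel T) (v1 v2 : T)
  : mgraph T {set T} :=
  MGraph (setT :\ v2) (sedges adj) (fun e => merge v1 v2 @: e).

(* Main.v *)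
Require Import Defs.
From mathcomp Require Import all_boot.
Set Implicit Arguments. Unset Strict Implicit. Unset Printing Implicit Defensive.

Lemma sedgesP (T : finType) (adj : rel T) e :
  reflect (exists x y, adj x y /\ e = [set x; y]) (e \in sedges adj).
Proof.
rewrite inE; apply: (iffP existsP) => [[x /existsP [y /andP [a /eqP ->]]]|[x [y [a ->]]]].
  by exists x, y.
by exists x; apply/existsP; exists y; rewrite a eqxx.
Qed.

Lemma leaf_edge (T : finType) (adj : rel T) (adj_sym : symmetric adj) v e :
  is_leaf adj v -> e \in sedges adj -> v \in e ->
  exists u, e = [set v; u] /\ [set u | adj v u] = [set u].
Proof.
move=> /cards1P [u hu] /sedgesP [x [y [a ->]]] vin.
exists u; split => //.
have nb z : adj v z -> z = u.
  by move=> h; apply/set1P; rewrite -hu in_set.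
move: vin; rewrite !inE => /orP [] /eqP ?; subst v.
  by rewrite (nb y a).
by rewrite setUC; rewrite adj_sym in a; rewrite (nb x a).
Qed.

Lemma leaf_count (T : finType) (adj : rel T) (adj_sym : symmetric adj) v (F : {set {set T}}) :
  is_leaf adj v -> F \subset sedges adj ->
  #|[set e in F | v \in e]| <= 1.
Proof.
move=> lv sF.
case: (set_0Vmem [set e in F | v \in e]) => [-> | [e0 he0]]; first by rewrite cards0.
rewrite -(cards1 e0) subset_leq_card //.
apply/subsetP => e; rewrite !inE => /andP [eF ve].
move: he0; rewrite !inE => /andP [e0F ve0].
have [u1 [-> h1]] := leaf_edge adj_sym lv (subsetP sF _ eF) ve.
have [u2 [-> h2]] := leaf_edge adj_sym lv (subsetP sF _ e0F) ve0.
move: h1; rewrite h2 => /setP /(_ u1); rewrite !inE eqxx => /eqP ->.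
by [].
Qed.

Lemma sedge_card (T : finType) (adj : rel T) (adj_irr : irreflexive adj) e :
  e \in sedges adj -> #|e| = 2.
Proof.
move=> /sedgesP [x [y [a ->]]]; rewrite cards2.
by case: eqP a => [->|//]; rewrite adj_irr.
Qed.

Lemma mdeg_G (T : finType) (adj : rel T) (adj_irr : irreflexive adj) (F : {set {set T}}) x :
  F \subset sedges adj -> mdeg (sgraph adj) F x = #|[set e in F | x \in e]|.
Proof.
move=> sF; rewrite /mdeg /= -sum1_card.
apply: eq_big => e; first by rewrite !inE.
by move=> /andP [eF _]; rewrite (sedge_card adj_irr (subsetP sF _ eF)).
Qed.

Lemma merge_card1 (T : finType) (adj : rel T) (adj_irr : irreflexive adj) (v1 v2 : T) e :
  v1 != v2 -> e \in sedges adj -> #|Defs.merge v1 v2 @: e| == 1 -> e = [set v1; v2].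
Proof.
move=> hv /sedgesP [x [y [a ->]]].
have xy : x != y by apply/eqP => exy; rewrite exy adj_irr in a.
rewrite imsetU1 imset_set1 cards2 /Defs.merge.
case: (eqVneq x v2) => [ex|nx]; case: (eqVneq y v2) => [ey|ny] //=.
- by rewrite ex ey eqxx in xy.
- by rewrite ex; case: (eqVneq v1 y) => [<-|] // _; rewrite setUC.
- by rewrite ey; case: (eqVneq x v1) => [->|].
- by rewrite xy.
Qed.

Lemma in_merge (T : finType) (v1 v2 : T) (e : {set T}) x :
  x \in Defs.merge v1 v2 @: e -> (x \in e) || (x == v1).
Proof.
move=> /imsetP [y ye ->]; rewrite /Defs.merge; case: eqP => _; first by rewrite eqxx orbT.
by rewrite ye.
Qed.

Lemma in_merge_other (T : finType) (v1 v2 : T) (e : {set T}) x :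
  x != v1 -> x != v2 -> (x \in Defs.merge v1 v2 @: e) = (x \in e).
Proof.
move=> n1 n2; apply/idP/idP.
  by move=> /in_merge; rewrite (negbTE n1) orbF.
move=> xe; apply/imsetP; exists x => //; by rewrite /Defs.merge (negbTE n2).
Qed.

Lemma mdeg_other (T : finType) (adj : rel T) (adj_irr : irreflexive adj) (v1 v2 : T) (hv : v1 != v2)
  (F : {set {set T}}) x :
  F \subset sedges adj -> x != v1 -> x != v2 ->
  mdeg (identify_leaves adj v1 v2) F x = mdeg (sgraph adj) F x.
Proof.
move=> sF n1 n2; rewrite /mdeg /=.
apply: eq_big => e; first by rewrite (in_merge_other _ n1 n2).
move=> /andP [eF xe].
rewrite (sedge_card adj_irr (subsetP sF _ eF)) /=.
case h: (#|_| == 1) => //.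
move: xe => /in_merge; rewrite (merge_card1 adj_irr hv (subsetP sF _ eF) h) !inE.
by rewrite (negbTE n1) (negbTE n2).
Qed.

Lemma mdeg_v1 (T : finType) (adj : rel T) (adj_sym : symmetric adj) (adj_irr : irreflexive adj)
  (v1 v2 : T) (hv : v1 != v2) (l1 : is_leaf adj v1) (l2 : is_leaf adj v2)
  (F : {set {set T}}) :
  F \subset sedges adj -> mdeg (identify_leaves adj v1 v2) F v1 <= 2.
Proof.
move=> sF; rewrite /mdeg /=.
apply: (@leq_trans (\sum_(e in F) ((v1 \in e) + (v2 \in e)))).
  rewrite big_mkcondr /=; apply: leq_sum => e eF; case: ifP => // ve.
  case h: (#|_| == 1).
    by rewrite (merge_card1 adj_irr hv (subsetP sF _ eF) h) !inE !eqxx orbT.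
  move: ve => /imsetP [y ye]; rewrite /Defs.merge; case: eqVneq => [ey|_] ey'.
    by rewrite -ey ye addn1.
  by rewrite ey' ye.
rewrite big_split /= -(addn1 1) leq_add //.
- apply: leq_trans (leaf_count adj_sym l1 sF).
  rewrite -sum1_card [X in _ <= X]big_mkcond [X in X <= _]big_mkcond /=.
  by apply: leq_sum => e _; rewrite !inE; case: (e \in F); case: (v1 \in e).
- apply: leq_trans (leaf_count adj_sym l2 sF).
  rewrite -sum1_card [X in _ <= X]big_mkcond [X in X <= _]big_mkcond /=.
  by apply: leq_sum => e _; rewrite !inE; case: (e \in F); case: (v2 \in e).
Qed.

Theorem mainTheorem12 (T : finType) (adj : rel T)
  (adj_sym : symmetric adj) (adj_irr : irreflexive adj)
  (hT : 3 <= #|T|) (v1 v2 : T) (hv : v1 != v2)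
  (l1 : is_leaf adj v1) (l2 : is_leaf adj v2) :
  M2 (sgraph adj) = M2 (identify_leaves adj v1 v2).
Proof.
apply/setP => F; rewrite !inE /two_matching /=.
case sF: (F \subset sedges adj) => //=.
apply/forallP/forallP => H x; apply/implyP => xin.
- case: (eqVneq x v1) => [->|n1]; first exact: mdeg_v1.
  move: xin; rewrite !inE andbT => n2.
  rewrite (mdeg_other adj_irr hv sF n1 n2).
  by move: (H x) => /implyP; apply; rewrite inE.
- case: (eqVneq x v1) => [->|n1].
    by rewrite (mdeg_G adj_irr _ sF); apply: leq_trans (leaf_count adj_sym l1 sF) _.
  case: (eqVneq x v2) => [->|n2].
    by rewrite (mdeg_G adj_irr _ sF); apply: leq_trans (leaf_count adj_sym l2 sF) _.
  rewrite -(mdeg_other adj_irr hv sF n1 n2).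
  by move: (H x) => /implyP; apply; rewrite !inE n2.
Qed.
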